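(* Let $R$ be a commutative ring and $(A,d)$ a differential graded $R$-algebra, and suppose that the left dg-module $(A,d)$ over $(A,d)$ is a finite direct sum of dg-simple left dg-modules over $(A,d)$. Then for any dg-simple left dg-module $(S,\delta)$ over $(A,d)$ there is an integer $n\in\mathbb{Z}$ such that $(S,\delta)[n]$ is (isomorphic to) a direct summand of $(A,d)$ as left dg-module.
   Context: A differential graded (dg) $R$-algebra $(A,d)$ is a $\mathbb{Z}$-graded $R$-algebra $A$ with an $R$-linear degree-$1$ endomorphism $d$, $d^2=0$, $d(ab)=d(a)b+(-1)^{|a|}a\,d(b)$ for homogeneous $a,b$. A left dg-module $(M,\delta)$ is a graded left $A$-module with an $R$-linear degree-$1$ map $\delta$, $\delta^2=0$, $\delta(am)=d(a)m+(-1)^{|a|}a\,\delta(m)$. A dg-submodule is a graded submodule stable under $\delta$; morphisms are degree-$0$ $A$-linear maps commuting with differentials. $(S,\delta)$ is dg-simple if its only dg-submodules are $0$ and $S$ (and $S\neq 0$). For $n\in\mathbb{Z}$, $(M,\delta)[n]$ denotes the shifted dg-module, with degree-$k$ component $M^{k+n}$ (and the differential adjusted by the standard sign). *)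

(* Defs.v *)
From HB Require Import structures.
From mathcomp Require Import all_boot all_order all_algebra.
Set Implicit Arguments. Unset Strict Implicit. Unset Printing Implicit Defensive.
Import Order.TTheory GRing.Theory Num.Theory.
Local Open Scope ring_scope.

Definition sgnA {T : pzRingType} (i : int) : T := (-1) ^+ absz i.

Definition is_grading (T : zmodType) (G : int -> T -> Prop) : Prop :=
  (forall k, G k 0) /\
  (forall k x y, G k x -> G k y -> G k (x - y)) /\
  (forall x : T, exists (s : seq int) (f : int -> T),
      (forall k, G k (f k)) /\ x = \sum_(k <- s) f k) /\
  (forall (s : seq int) (f : int -> T), uniq s ->
      (forall k, k \in s -> G k (f k)) ->
      \sum_(k <- s) f k = 0 -> forall k, k \in s -> f k = 0).

Definition dg_algebra (R : comNzRingType) (A : algType R)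
    (GA : int -> A -> Prop) (d : A -> A) : Prop :=
  is_grading GA /\
  (forall k (r : R) (a : A), GA k a -> GA k (r *: a)) /\
  GA 0 1 /\
  (forall i j (a b : A), GA i a -> GA j b -> GA (i + j) (a * b)) /\
  (forall a b : A, d (a + b) = d a + d b) /\
  (forall (r : R) (a : A), d (r *: a) = r *: d a) /\
  (forall k (a : A), GA k a -> GA (k + 1) (d a)) /\
  (forall a : A, d (d a) = 0) /\
  (forall i (a b : A), GA i a -> d (a * b) = d a * b + sgnA i * (a * d b)).

(* (M, delta) is a left dg-module over (A, d), with grading GM.
   R acts on M through A (r . m := r%:A *: m). *)
Definition dg_module (R : comNzRingType) (A : algType R)
    (GA : int -> A -> Prop) (d : A -> A)
    (M : lmodType A) (GM : int -> M -> Prop) (delta : M -> M) : Prop :=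
  is_grading GM /\
  (forall i j (a : A) (m : M), GA i a -> GM j m -> GM (i + j) (a *: m)) /\
  (forall m n : M, delta (m + n) = delta m + delta n) /\
  (forall (r : R) (m : M), delta ((r%:A : A) *: m) = (r%:A : A) *: delta m) /\
  (forall k (m : M), GM k m -> GM (k + 1) (delta m)) /\
  (forall m : M, delta (delta m) = 0) /\
  (forall i (a : A) (m : M), GA i a ->
      delta (a *: m) = d a *: m + sgnA i *: (a *: delta m)).

Definition dg_submodule (A : pzRingType) (M : lmodType A)
    (GM : int -> M -> Prop) (delta : M -> M) (N : M -> Prop) : Prop :=
  N 0 /\
  (forall x y, N x -> N y -> N (x - y)) /\
  (forall (a : A) x, N x -> N (a *: x)) /\
  (forall x, N x -> N (delta x)) /\
  (forall (s : seq int) (f : int -> M), uniq s -> (forall k, GM k (f k)) ->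
      N (\sum_(k <- s) f k) -> forall k, k \in s -> N (f k)).

Definition dg_simple_sub (A : pzRingType) (M : lmodType A)
    (GM : int -> M -> Prop) (delta : M -> M) (N : M -> Prop) : Prop :=
  dg_submodule GM delta N /\
  (exists x, N x /\ x <> 0) /\
  (forall P : M -> Prop, dg_submodule GM delta P -> (forall x, P x -> N x) ->
      (forall x, P x -> x = 0) \/ (forall x, N x -> P x)).

Definition dg_simple (A : pzRingType) (M : lmodType A)
    (GM : int -> M -> Prop) (delta : M -> M) : Prop :=
  dg_simple_sub GM delta (fun _ => True).

Definition internal_dsum (M : zmodType) (m : nat) (N : 'I_m -> M -> Prop) : Prop :=
  (forall x : M, exists f : 'I_m -> M, (forall i, N i (f i)) /\ x = \sum_i f i) /\
  (forall f : 'I_m -> M, (forall i, N i (f i)) -> \sum_i f i = 0 ->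
      forall i, f i = 0).

(* f : S -> M induces an isomorphism of dg-modules from the shift (S, deltaS)[n]
   onto the dg-submodule N of (M, deltaM).  Convention for the shift:
   (S[n])^k = S^(k+n), differential (-1)^n deltaS, and action
   a .' s = (-1)^(n|a|) a s for homogeneous a.  Thus an isomorphism
   phi : S[n] -> N (degree 0, A-linear, commuting with differentials) is an
   additive bijection f : S -> N with f(S^(k+n)) in M^k,
   f((-1)^(n i) a s) = a f(s) and f((-1)^n deltaS s) = deltaM (f s). *)
Definition dg_shift_iso (A : pzRingType) (GA : int -> A -> Prop)
    (S : lmodType A) (GS : int -> S -> Prop) (deltaS : S -> S)
    (M : lmodType A) (GM : int -> M -> Prop) (deltaM : M -> M)
    (n : int) (f : S -> M) (N : M -> Prop) : Prop :=
  (forall x y, f (x + y) = f x + f y) /\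
  injective f /\
  (forall y, N y <-> exists x, f x = y) /\
  (forall k x, GS (k + n) x -> GM k (f x)) /\
  (forall i (a : A) x, GA i a -> f (sgnA (n * i) *: (a *: x)) = a *: f x) /\
  (forall x, f (sgnA n *: deltaS x) = deltaM (f x)).

(* Main.v *)
Require Import Defs.
From HB Require Import structures.
From mathcomp Require Import all_boot all_order all_algebra.
From mathcomp Require Import zify.
From Stdlib Require Import Classical IndefiniteDescription.
Import GRing.Theory.
Local Open Scope ring_scope.
Set Implicit Arguments. Unset Strict Implicit. Unset Printing Implicit Defensive.

Lemma sum_pred1_uniq (I : eqType) (V : zmodType) (r : seq I) (i : I) (F : I -> V) :
  uniq r -> \sum_(j <- r | j == i) F j = if i \in r then F i else 0.
Proof.
elim: r => [|j r IH] /=; first by rewrite big_nil.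
move=> /andP [jr ur]; rewrite big_cons IH // in_cons.
case: (eqVneq j i) => [<-|ne] /=; first by rewrite (negbTE jr) addr0.
by [].
Qed.

Section Grading.
Variables (T : zmodType) (G : int -> T -> Prop) (HG : is_grading G).

Lemma G0 k : G k 0. Proof. by case: HG. Qed.
Lemma GB k x y : G k x -> G k y -> G k (x - y). Proof. by case: HG => _ [h _]; apply: h. Qed.
Lemma GN k x : G k x -> G k (- x).
Proof. by move=> h; rewrite -sub0r; apply: GB => //; apply: G0. Qed.
Lemma GD k x y : G k x -> G k y -> G k (x + y).
Proof. by move=> hx hy; rewrite -(opprK y); apply: GB => //; apply: GN. Qed.
Lemma Gsum (I : Type) (r : seq I) (P : pred I) (F : I -> T) k :
  (forall i, P i -> G k (F i)) -> G k (\sum_(i <- r | P i) F i).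
Proof.
move=> h; elim: r => [|i r IH]; first by rewrite big_nil; apply: G0.
rewrite big_cons; case: ifP => Pi //; exact: GD (h _ Pi) IH.
Qed.

Definition homog (l : seq (int * T)) := forall p, p \in l -> G p.1 p.2.

Lemma partition_sum (l : seq (int * T)) :
  \sum_(p <- l) p.2 = \sum_(k <- undup (map fst l)) \sum_(p <- l | p.1 == k) p.2.
Proof.
rewrite (exchange_big_dep predT) //=.
rewrite [RHS]big_seq_cond [LHS]big_seq_cond; apply: eq_bigr => p /andP [pl _].
have -> : \sum_(i <- undup (map fst l) | true && (p.1 == i)) p.2 =
          \sum_(i <- undup (map fst l) | i == p.1) p.2.
  by apply: eq_bigl => i; rewrite eq_sym.
by rewrite sum_pred1_uniq ?undup_uniq // mem_undup map_f.
Qed.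

Lemma KL (l : seq (int * T)) : homog l -> \sum_(p <- l) p.2 = 0 ->
  forall k, \sum_(p <- l | p.1 == k) p.2 = 0.
Proof.
move=> hl h0 k.
case: (boolP (k \in undup (map fst l))) => kin; last first.
  rewrite big_seq_cond big1 // => p /andP [pl /eqP e]; move: kin.
  by rewrite mem_undup -e map_f.
case: HG => _ [_ [_ U]].
apply: (U (undup (map fst l)) (fun k => \sum_(p <- l | p.1 == k) p.2)) => //.
- exact: undup_uniq.
- move=> j _; rewrite big_seq_cond; apply: Gsum => p /andP [pl /eqP e].
  by rewrite -e; apply: hl.
- by rewrite -partition_sum.
Qed.

Lemma dec_ex x : exists l, homog l /\ x = \sum_(p <- l) p.2.
Proof.
case: HG => _ [_ [E _]]; have [s [f [hf ->]]] := E x.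
exists [seq (k, f k) | k <- s]; split; last by rewrite big_map.
by move=> p /mapP [k _ ->].
Qed.

Definition dec x : seq (int * T) :=
  proj1_sig (constructive_indefinite_description _ (dec_ex x)).
Lemma decP x : homog (dec x) /\ x = \sum_(p <- dec x) p.2.
Proof. exact: proj2_sig (constructive_indefinite_description _ (dec_ex x)). Qed.

Definition hcomp k x := \sum_(p <- dec x | p.1 == k) p.2.
Definition supp x := undup (map fst (dec x)).

Lemma comp_spec l x k : homog l -> x = \sum_(p <- l) p.2 ->
  hcomp k x = \sum_(p <- l | p.1 == k) p.2.
Proof.
move=> hl ex; have [hd ed] := decP x.
set l' := dec x ++ [seq (p.1, - p.2) | p <- l].
have hl' : homog l'.
  move=> p; rewrite mem_cat => /orP [/hd //|/mapP [q ql ->]] /=.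
  by apply: GN; apply: hl.
have hs : \sum_(p <- l') p.2 = 0.
  by rewrite big_cat big_map /= sumrN -ed -ex subrr.
have := KL hl' hs k; rewrite big_cat big_map /= sumrN.
by move=> /eqP; rewrite subr_eq0 => /eqP.
Qed.

Lemma comp_G k x : G k (hcomp k x).
Proof.
rewrite /hcomp big_seq_cond; apply: Gsum => p /andP [pl /eqP e].
by rewrite -e; case: (decP x) => h _; apply: h.
Qed.

Lemma comp_hom j y k : G j y -> hcomp k y = if k == j then y else 0.
Proof.
move=> hy; rewrite (comp_spec (l := [:: (j, y)])) ?big_seq1 //.
  by rewrite big_cons big_nil /= eq_sym; case: eqP; rewrite ?addr0.
by move=> p; rewrite inE => /eqP ->.
Qed.

Lemma comp_add k x y : hcomp k (x + y) = hcomp k x + hcomp k y.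
Proof.
have [hx ex] := decP x; have [hy ey] := decP y.
rewrite (comp_spec (l := dec x ++ dec y)) ?big_cat //.
  by move=> p; rewrite mem_cat => /orP [/hx|/hy].
by rewrite -ex -ey.
Qed.

Lemma comp0 k : hcomp k 0 = 0.
Proof. by apply: (addrI (hcomp k 0)); rewrite -comp_add !addr0. Qed.

Lemma comp_opp k x : hcomp k (- x) = - hcomp k x.
Proof. by apply/eqP; rewrite -addr_eq0 -comp_add addNr comp0. Qed.

Lemma comp_sub k x y : hcomp k (x - y) = hcomp k x - hcomp k y.
Proof. by rewrite comp_add comp_opp. Qed.

Lemma comp_out k x : k \notin supp x -> hcomp k x = 0.
Proof.
move=> kin; rewrite /hcomp big_seq_cond big1 // => p /andP [pl /eqP e]; move: kin.
by rewrite mem_undup -e map_f.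
Qed.

Lemma decomp x : x = \sum_(k <- supp x) hcomp k x.
Proof. by case: (decP x) => _ ex; rewrite {1}ex partition_sum. Qed.

Lemma comp_ext x : (forall k, hcomp k x = 0) -> x = 0.
Proof. by move=> h; rewrite (decomp x) big1. Qed.

Lemma comp_ext2 x y : (forall k, hcomp k x = hcomp k y) -> x = y.
Proof.
move=> h; apply/eqP; rewrite -subr_eq0; apply/eqP; apply: comp_ext => k.
by rewrite comp_sub h subrr.
Qed.

Lemma comp_uniq_sum (s : seq int) (f : int -> T) k : uniq s ->
  (forall j, j \in s -> G j (f j)) ->
  hcomp k (\sum_(j <- s) f j) = if k \in s then f k else 0.
Proof.
move=> us hf; rewrite (comp_spec (l := [seq (j, f j) | j <- s])) ?big_map //.
  by rewrite sum_pred1_uniq.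
by move=> p /mapP [j js ->]; apply: hf.
Qed.

Lemma comp_homog_eq j y : G j y -> y = hcomp j y.
Proof. by move=> h; rewrite (comp_hom _ h) eqxx. Qed.

End Grading.

Lemma comp_morph (T U : zmodType) (G : int -> T -> Prop) (H : int -> U -> Prop)
  (HG : is_grading G) (HH : is_grading H) (h : T -> U) (n : int) :
  (forall x y, h (x + y) = h x + h y) ->
  (forall j y, G j y -> H (j + n) (h y)) ->
  forall k x, hcomp HH k (h x) = h (hcomp HG (k - n) x).
Proof.
move=> hadd hdeg k x.
have h0 : h 0 = 0 by apply: (addrI (h 0)); rewrite -hadd !addr0.
have [hx ex] := decP HG x.
rewrite (comp_spec HH (l := [seq (p.1 + n, h p.2) | p <- dec HG x])) //.
- rewrite big_map /hcomp (big_morph h hadd h0); apply: eq_bigl => p /=.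
  by apply/eqP/eqP => [<-|->]; rewrite ?addrK ?subrK.
- by move=> p /mapP [q ql ->] /=; apply: hdeg; apply: hx.
- by rewrite big_map -(big_morph h hadd h0) -ex.
Qed.

Lemma oddabsD (a b : int) : odd (absz (a + b)) = odd (absz a) (+) odd (absz b).
Proof. lia. Qed.

Lemma sgnA_odd (T : pzRingType) i : sgnA i = (-1) ^+ odd (absz i) :> T.
Proof. by rewrite /sgnA signr_odd. Qed.

Lemma sgnM (T : pzRingType) i (x : T) :
  sgnA i * x = if odd (absz i) then - x else x.
Proof. by rewrite sgnA_odd mulr_sign. Qed.

Lemma sgnZ (T : pzRingType) (M : lmodType T) i (x : M) :
  sgnA i *: x = if odd (absz i) then - x else x.
Proof. rewrite sgnA_odd; case: (odd _); [by rewrite expr1 scaleN1r | by rewrite expr0 scale1r]. Qed.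

Lemma sgnD (T : pzRingType) i j : sgnA (i + j) = sgnA i * sgnA j :> T.
Proof. by rewrite !sgnA_odd oddabsD signr_addb. Qed.

Lemma sgn_mul2 (T : pzRingType) i j (x y : T) :
  sgnA i * x * (sgnA j * y) = sgnA (i + j) * (x * y).
Proof. by rewrite !sgnA_odd mulr_signM oddabsD. Qed.

Lemma sgnK (T : pzRingType) i (x : T) : sgnA i * (sgnA i * x) = x.
Proof. by rewrite /sgnA signrMK. Qed.

Lemma sgnZK (T : pzRingType) (M : lmodType T) i (x : M) : sgnA i *: (sgnA i *: x) = x.
Proof. by rewrite scalerA -[sgnA i * sgnA i]mulr1 -mulrA sgnK scale1r. Qed.

Lemma sgn0 (T : pzRingType) : sgnA 0 = 1 :> T.
Proof. by rewrite /sgnA expr0. Qed.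

Lemma dg_sub_and (T : pzRingType) (M : lmodType T) (GM : int -> M -> Prop)
  (dl : M -> M) (N1 N2 : M -> Prop) :
  dg_submodule GM dl N1 -> dg_submodule GM dl N2 ->
  dg_submodule GM dl (fun x => N1 x /\ N2 x).
Proof.
move=> [a1 [b1 [c1 [d1 e1]]]] [a2 [b2 [c2 [d2 e2]]]].
split; first by [].
split; first by move=> x y [? ?] [? ?]; split; [apply: b1|apply: b2].
split; first by move=> a x [? ?]; split; [apply: c1|apply: c2].
split; first by move=> x [? ?]; split; [apply: d1|apply: d2].
move=> s f us hf [h1 h2] k ks; split; [exact: e1 h1 k ks|exact: e2 h2 k ks].
Qed.

Lemma sub_comp (T : pzRingType) (M : lmodType T) (GM : int -> M -> Prop)
  (HG : is_grading GM) (dl : M -> M) (N : M -> Prop) :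
  dg_submodule GM dl N -> forall k y, N y -> N (hcomp HG k y).
Proof.
move=> [h0 [_ [_ [_ hgr]]]] k y hy.
case: (boolP (k \in supp HG y)) => kin; last by rewrite comp_out.
apply: (hgr (supp HG y) (fun j => hcomp HG j y)) => //.
- exact: undup_uniq.
- by move=> j; apply: comp_G.
- by rewrite -decomp.
Qed.

Section Main.
Variables (R : comNzRingType) (A : algType R) (GA : int -> A -> Prop) (d : A -> A).
Hypothesis HA : dg_algebra GA d.
Variables (S : lmodType A) (GS : int -> S -> Prop) (delta : S -> S).
Hypothesis HS : dg_module GA d GS delta.

Lemma HGA : is_grading GA. Proof. by case: HA. Qed.
Lemma HGS : is_grading GS. Proof. by case: HS. Qed.
Lemma GA1 : GA 0 1. Proof. by case: HA => _ [_ []]. Qed.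
Lemma GAmul i j a b : GA i a -> GA j b -> GA (i + j) (a * b).
Proof. by case: HA => _ [_ [_ [h _]]]; apply: h. Qed.
Lemma dadd a b : d (a + b) = d a + d b.
Proof. by case: HA => _ [_ [_ [_ [h _]]]]; apply: h. Qed.
Lemma dGA k a : GA k a -> GA (k + 1) (d a).
Proof. by case: HA => _ [_ [_ [_ [_ [_ [h _]]]]]]; apply: h. Qed.
Lemma GSact i j a m : GA i a -> GS j m -> GS (i + j) (a *: m).
Proof. by case: HS => _ [h _]; apply: h. Qed.
Lemma dladd m m' : delta (m + m') = delta m + delta m'.
Proof. by case: HS => _ [_ [h _]]; apply: h. Qed.
Lemma dlGS k m : GS k m -> GS (k + 1) (delta m).
Proof. by case: HS => _ [_ [_ [_ [h _]]]]; apply: h. Qed.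
Lemma dldl m : delta (delta m) = 0.
Proof. by case: HS => _ [_ [_ [_ [_ [h _]]]]]; apply: h. Qed.
Lemma dlLeib i a m : GA i a -> delta (a *: m) = d a *: m + sgnA i *: (a *: delta m).
Proof. by case: HS => _ [_ [_ [_ [_ [_ h]]]]]; apply: h. Qed.

Lemma d0 : d 0 = 0.
Proof. by apply: (addrI (d 0)); rewrite -dadd !addr0. Qed.
Lemma dN a : d (- a) = - d a.
Proof. by apply/eqP; rewrite -addr_eq0 -dadd addNr d0. Qed.
Lemma dsum (I : Type) (r : seq I) (P : pred I) (F : I -> A) :
  d (\sum_(i <- r | P i) F i) = \sum_(i <- r | P i) d (F i).
Proof. exact: (big_morph d dadd d0). Qed.
Lemma dsgn i a : d (sgnA i * a) = sgnA i * d a.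
Proof. by rewrite !sgnM; case: (odd _); rewrite ?dN. Qed.

Lemma dl0 : delta 0 = 0.
Proof. by apply: (addrI (delta 0)); rewrite -dladd !addr0. Qed.
Lemma dlN m : delta (- m) = - delta m.
Proof. by apply/eqP; rewrite -addr_eq0 -dladd addNr dl0. Qed.
Lemma dlsum (I : Type) (r : seq I) (P : pred I) (F : I -> S) :
  delta (\sum_(i <- r | P i) F i) = \sum_(i <- r | P i) delta (F i).
Proof. exact: (big_morph delta dladd dl0). Qed.
Lemma dlsgn i m : delta (sgnA i *: m) = sgnA i *: delta m.
Proof. by rewrite !sgnZ; case: (odd _); rewrite ?dlN. Qed.

Lemma GAsgn i k a : GA k a -> GA k (sgnA i * a).
Proof. by rewrite sgnM; case: (odd _) => // h; apply: (GN HGA). Qed.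

Variable n : int.

Definition tau (b : A) : A :=
  \sum_(j <- supp HGA b) sgnA (n * j) * hcomp HGA j b.

Lemma comp_tau k b : hcomp HGA k (tau b) = sgnA (n * k) * hcomp HGA k b.
Proof.
rewrite /tau comp_uniq_sum ?undup_uniq //.
  by case: ifP => // kin; rewrite comp_out ?kin // mulr0.
by move=> j _; apply: GAsgn; apply: comp_G.
Qed.

Lemma tau_hom j b : GA j b -> tau b = sgnA (n * j) * b.
Proof.
move=> hb; apply: (comp_ext2 (HG := HGA)) => k.
rewrite comp_tau (comp_hom HGA _ hb) (comp_hom HGA _ (GAsgn _ hb)).
by case: eqP => [->|]; rewrite ?mulr0.
Qed.

Lemma tau_add a b : tau (a + b) = tau a + tau b.
Proof.
by apply: (comp_ext2 (HG := HGA)) => k; rewrite comp_tau !comp_add !comp_tau mulrDr.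
Qed.
Lemma tau0 : tau 0 = 0.
Proof. by apply: (addrI (tau 0)); rewrite -tau_add !addr0. Qed.
Lemma tausum (I : Type) (r : seq I) (P : pred I) (F : I -> A) :
  tau (\sum_(i <- r | P i) F i) = \sum_(i <- r | P i) tau (F i).
Proof. exact: (big_morph tau tau_add tau0). Qed.
Lemma tauN a : tau (- a) = - tau a.
Proof. by apply/eqP; rewrite -addr_eq0 -tau_add addNr tau0. Qed.
Lemma tau_sgn i a : tau (sgnA i * a) = sgnA i * tau a.
Proof. by rewrite !sgnM; case: (odd _); rewrite ?tauN. Qed.

Lemma tauK a : tau (tau a) = a.
Proof. by apply: (comp_ext2 (HG := HGA)) => k; rewrite !comp_tau sgnK. Qed.

Lemma tau1 : tau 1 = 1.
Proof. by rewrite (tau_hom GA1) mulr0 sgn0 mul1r. Qed.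

Lemma tau_mul a b : tau (a * b) = tau a * tau b.
Proof.
rewrite {1}(decomp HGA a) {1}(decomp HGA b) mulr_suml tausum.
rewrite [tau a]/tau [tau b]/tau mulr_suml.
apply: eq_bigr => i _; rewrite mulr_sumr tausum mulr_sumr; apply: eq_bigr => j _.
rewrite (tau_hom (GAmul (comp_G HGA i a) (comp_G HGA j b))).
by rewrite sgn_mul2 mulrDr.
Qed.

Lemma tau_d b : tau (d b) = sgnA n * d (tau b).
Proof.
rewrite {1}(decomp HGA b) dsum tausum [tau b]/tau dsum mulr_sumr; apply: eq_bigr => j _.
rewrite (tau_hom (dGA (comp_G HGA j b))) dsgn mulrA -sgnD.
by rewrite mulrDr mulr1 addrC.
Qed.

Variable z : S.
Hypothesis Gz : GS n z.
Hypothesis dz : delta z = 0.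

Definition phi (b : A) : S := tau b *: z.

Lemma phi_add a b : phi (a + b) = phi a + phi b.
Proof. by rewrite /phi tau_add scalerDl. Qed.
Lemma phi0 : phi 0 = 0.
Proof. by rewrite /phi tau0 scale0r. Qed.
Lemma phiN a : phi (- a) = - phi a.
Proof. by rewrite /phi tauN scaleNr. Qed.
Lemma phiB a b : phi (a - b) = phi a - phi b.
Proof. by rewrite phi_add phiN. Qed.
Lemma phisum (I : Type) (r : seq I) (P : pred I) (F : I -> A) :
  phi (\sum_(i <- r | P i) F i) = \sum_(i <- r | P i) phi (F i).
Proof. exact: (big_morph phi phi_add phi0). Qed.
Lemma phi_deg j b : GA j b -> GS (j + n) (phi b).
Proof. by move=> h; rewrite /phi (tau_hom h); apply: GSact => //; apply: GAsgn. Qed.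
Lemma phi_mul a b : phi (a * b) = tau a *: phi b.
Proof. by rewrite /phi tau_mul scalerA. Qed.
Lemma phi1 : phi 1 = z.
Proof. by rewrite /phi tau1 scale1r. Qed.

Lemma dl_lin c : delta (c *: z) = d c *: z.
Proof.
rewrite (decomp HGA c) scaler_suml dlsum dsum scaler_suml; apply: eq_bigr => j _.
by rewrite (dlLeib _ (comp_G HGA j c)) dz !scaler0 addr0.
Qed.

Lemma phi_d b : phi (d b) = sgnA n *: delta (phi b).
Proof. by rewrite /phi tau_d -scalerA dl_lin. Qed.

Lemma phi_sgn i x : phi (sgnA i * x) = sgnA i *: phi x.
Proof. by rewrite /phi tau_sgn scalerA. Qed.

Lemma ker_sub : dg_submodule (M := A^o) GA d (fun x => phi x = 0).
Proof.
split; first exact: phi0.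
split; first by move=> x y hx hy; rewrite phiB hx hy subr0.
split; first by move=> a x hx; change (phi (a * x) = 0); rewrite phi_mul hx scaler0.
split; first by move=> x hx; rewrite phi_d hx dl0 scaler0.
move=> s f us hf hsum k ks.
have := @comp_morph _ _ _ _ HGA HGS phi n phi_add phi_deg (k + n) (\sum_(j <- s) f j).
rewrite hsum comp0 addrK comp_uniq_sum // ks => ->.
by [].
Qed.


Lemma main_step (N0 : A -> Prop) (HN0 : dg_simple_sub (M := A^o) GA d N0)
  (x0 : A) (Nx0 : N0 x0) (phx0 : phi x0 <> 0) (Hsimple : dg_simple GS delta) :
  exists (N N' : A^o -> Prop) (f : S -> A^o),
    dg_submodule (M := A^o) GA d N /\ dg_submodule (M := A^o) GA d N' /\
    (forall x : A, exists y z, N y /\ N' z /\ x = y + z) /\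
    (forall y : A, N y -> N' y -> y = 0) /\
    dg_shift_iso GA GS delta (M := A^o) GA d n f N.
Proof.
case: HN0 => HNsub [_ HNmin].
have HNsub' := HNsub.
case: HNsub' => N00 [N0B [N0Z [N0d N0gr]]].
have N0D : forall x y, N0 x -> N0 y -> N0 (x + y).
  move=> x y hx hy; have h := N0B x (0 - y) hx (N0B 0 y N00 hy); by rewrite sub0r opprK in h.
have [inj|all] := HNmin _ (dg_sub_and HNsub ker_sub) (fun x h => h.1); last first.
  by case: (all _ Nx0).
have inj2 : forall x y, N0 x -> N0 y -> phi x = phi y -> x = y.
  move=> x y hx hy e; apply/eqP; rewrite -subr_eq0; apply/eqP; apply: inj; split.
    exact: N0B.
  by rewrite phiB e subrr.
pose Q := fun s : S => exists y, N0 y /\ phi y = s.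
have hQ : dg_submodule GS delta Q.
  split; first by exists 0; split; [exact: N00| exact: phi0].
  split; first by move=> _ _ [y1 [h1 <-]] [y2 [h2 <-]]; exists (y1 - y2); split;
    [exact: N0B | exact: phiB].
  split.
    move=> a _ [y [hy <-]]; exists (tau a * y); split; first exact: (N0Z (tau a) y hy).
    by rewrite phi_mul tauK.
  split.
    move=> _ [y [hy <-]]; exists (sgnA n * d y); split.
      exact: (N0Z (sgnA n) (d y) (N0d y hy)).
    by rewrite phi_sgn phi_d sgnZK.
  move=> s g us hg [y [hy ey]] k ks.
  exists (hcomp HGA (k - n) y); split; first exact: (@sub_comp _ A^o GA HGA d N0 HNsub (k - n) y hy).
  rewrite -(@comp_morph _ _ _ _ HGA HGS phi n phi_add phi_deg) ey.
  by rewrite comp_uniq_sum // ks.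
case: Hsimple => _ [_ Hmin].
have [zero|surj] := Hmin Q hQ (fun _ _ => I).
  by case: phx0; apply: zero; exists x0.
pose f := fun s => proj1_sig (constructive_indefinite_description _ (surj s I)).
have fP : forall s, N0 (f s) /\ phi (f s) = s.
  by move=> s; exact: proj2_sig (constructive_indefinite_description _ (surj s I)).
exists N0, (fun x => phi x = 0), f.
split; first exact: HNsub.
split; first exact: ker_sub.
split.
  move=> x; exists (f (phi x)), (x - f (phi x)); split; first exact: (fP _).1.
  split; last by rewrite addrC subrK.
  by rewrite phiB (fP _).2 subrr.
split; first by move=> y hy hk; apply: inj.
split.
  move=> x y; apply: inj2; first exact: (fP _).1.
    by apply: N0D; [exact: (fP _).1|exact: (fP _).1].
  by rewrite phi_add !(fP _).2.
split; first by move=> x y e; rewrite -(fP x).2 -(fP y).2 e.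
split.
  move=> y; split; last by case=> x <-; exact: (fP x).1.
  move=> hy; exists (phi y); apply: inj2 => //; first exact: (fP _).1.
  by rewrite (fP _).2.
split.
  move=> k x hx.
  have -> : f x = hcomp HGA k (f x).
    apply: (comp_ext2 (HG := HGA)) => j.
    rewrite (comp_hom HGA _ (comp_G HGA k (f x))).
    case: eqP => [->//|njk].
    apply: inj; split; first exact: (@sub_comp _ A^o GA HGA d N0 HNsub j (f x) (fP x).1).
    have := @comp_morph _ _ _ _ HGA HGS phi n phi_add phi_deg (j + n) (f x).
    rewrite addrK (fP x).2 (comp_hom HGS _ hx) => <-.
    case: eqP => // /addIr e; by case: njk.
  exact: comp_G.
split.
  move=> i a x ha; apply: inj2; first exact: (fP _).1.
    exact: (N0Z a (f x) (fP x).1).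
  change (phi (f (sgnA (n * i) *: (a *: x))) = phi (a * f x)).
  by rewrite phi_mul (fP _).2 (fP _).2 (tau_hom ha) scalerA.
move=> x; apply: inj2; first exact: (fP _).1.
  exact: (N0d _ (fP x).1).
by rewrite phi_d !(fP _).2.
Qed.

End Main.

Unset Implicit Arguments. Set Strict Implicit. Set Printing Implicit Defensive.

Theorem lemma3p6 (R : comNzRingType) (A : algType R)
    (GA : int -> A -> Prop) (d : A -> A)
    (HA : dg_algebra GA d)
    (Hsum : exists (m : nat) (N : 'I_m -> A^o -> Prop),
        (forall i, dg_simple_sub (M := A^o) GA d (N i)) /\ internal_dsum N)
    (S : lmodType A) (GS : int -> S -> Prop) (delta : S -> S)
    (HS : dg_module GA d GS delta)
    (Hsimple : dg_simple GS delta) :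
  exists (n : int) (N N' : A^o -> Prop) (f : S -> A^o),
    dg_submodule (M := A^o) GA d N /\ dg_submodule (M := A^o) GA d N' /\
    (forall x : A, exists y z, N y /\ N' z /\ x = y + z) /\
    (forall y : A, N y -> N' y -> y = 0) /\
    dg_shift_iso GA GS delta (M := A^o) GA d n f N.
Proof.
have HGS := HGS HS.
have [n [z [Gz [dz nz]]]] : exists n z, GS n z /\ delta z = 0 /\ z <> 0.
  have Hs := Hsimple; case: Hs => _ [[x [_ xn0]] _].
  have [k hk] : exists k, hcomp HGS k x <> 0.
    apply: NNPP => hne; apply: xn0; apply: (comp_ext (HG := HGS)) => k.
    by apply: NNPP => h; apply: hne; exists k.
  have Gw := comp_G HGS k x.
  case: (eqVneq (delta (hcomp HGS k x)) 0) => [e|ne].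
    by exists k, (hcomp HGS k x).
  exists (k + 1), (delta (hcomp HGS k x)); split; first exact: (dlGS HS Gw).
  split; [exact: (dldl HS) | exact/eqP].
case: Hsum => m [N [HN [Hcov _]]].
have [fx [hfx e1]] := Hcov 1.
have [i hi] : exists i, phi HA n z (fx i) <> 0.
  apply: NNPP => hne; apply: nz.
  rewrite -(phi1 HA n z) e1 phisum big1 // => i _.
  by apply: NNPP => h; apply: hne; exists i.
exists n; exact: (main_step HS Gz dz (HN i) (hfx i) hi Hsimple).
Qed.
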